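(* Let $\Gamma$ be a 3-colex and $c\neq c'$ colors. If $S$ is a $Z$-stabilizer of the 3D toric code on $\Gamma^{*\setminus cc'}$, then there exists a $Z$-stabilizer $\overline S$ of the color code on $\Gamma$ such that $\pi_{cc'}(\overline S)=S$ and $\pi_{xy}(\overline S)=I$ for every unordered pair $\{x,y\}$ of distinct colors with $\{x,y\}\neq\{c,c'\}$.
   Context: Colors are $\{r,b,g,y\}$. A 3-colex $\Gamma$ is a 3-dimensional cell complex without boundary in which every vertex is 4-valent and lies in exactly four 3-cells, and whose 3-cells are properly 4-colored: every face lies in exactly two 3-cells, which have different colors. The dual complex $\Gamma^*$ has an $i$-cell for every $(3-i)$-cell of $\Gamma$, with incidences reversed; every 3-cell of $\Gamma^*$ is a tetrahedron. A vertex of $\Gamma^*$ is given the color of the corresponding 3-cell of $\Gamma$, so the four vertices of each tetrahedron have distinct colors. An edge with endpoint colors $x,y$ is an $xy$-edge. The 3D color code on $\Gamma$ has one qubit per tetrahedron $\nu$ of $\Gamma^*$, $X$-stabilizer generators $\prod_{\nu\ni v}X_\nu$ for vertices $v$, and $Z$-stabilizer generators $B^Z_e=\prod_{\nu\supset e}Z_\nu$ for edges $e$; $Z$-stabilizers are products of the $B^Z_e$. For distinct colors $x,y$ with remaining colors $u,w$: $\pi_{xy}(\nu)$ is the unique $uw$-edge of the tetrahedron $\nu$, and $\pi_{xy}(\prod_{\nu\in\Omega}Z_\nu)=\prod_{\nu\in\Omega}Z_{\pi_{xy}(\nu)}$ (with $Z^2=I$); $\pi_{xy}=\pi_{yx}$.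 The minor complex $\Gamma^{*\setminus xy}$ has as vertices the $u$- and $w$-vertices of $\Gamma^*$, as edges the $uw$-edges of $\Gamma^*$, one face $f_e$ for each $xy$-edge $e$ of $\Gamma^*$ whose boundary $\partial f_e$ is the set of $uw$-edges of the tetrahedra containing $e$ (these form a cycle), and one 3-cell for each vertex of color $x$ or $y$. The 3D toric code on $\Gamma^{*\setminus xy}$ has qubits on edges and $Z$-stabilizer generators $B^Z_{f}=\prod_{t\in\partial f}Z_t$ for faces $f$; its $Z$-stabilizers are products of these. *)

(* Defs.v *)
From mathcomp Require Import all_boot all_algebra.
Set Implicit Arguments. Unset Strict Implicit. Unset Printing Implicit Defensive.
Import GRing.Theory.
Local Open Scope ring_scope.

Definition color := 'I_4.

(* The dual complex Gamma^* of a 3-colex Gamma.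
   cV = vertices of Gamma^*   (= 3-cells of Gamma),
   cE = edges of Gamma^*      (= faces of Gamma),
   cF = triangles of Gamma^*  (= edges of Gamma),
   cT = tetrahedra of Gamma^* (= vertices of Gamma).
   Simplices inside a tetrahedron/triangle are indexed by their color sets
   (each tetrahedron has exactly one vertex of each color). *)
Record colex3 := Colex3 {
  cV : finType; cE : finType; cF : finType; cT : finType;
  vcol : cV -> color;
  ecol : cE -> {set color};
  ev   : cE -> color -> cV;
  fcol : cF -> {set color};
  fe   : cF -> {set color} -> cE;
  fv   : cF -> color -> cV;
  tv   : cT -> color -> cV;
  te   : cT -> {set color} -> cE;
  tf   : cT -> {set color} -> cF;
  ecol_card : forall e, #|ecol e| = 2%N;
  ev_col : forall e c, c \in ecol e -> vcol (ev e c) = c;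
  fcol_card : forall f, #|fcol f| = 3%N;
  fv_col : forall f c, c \in fcol f -> vcol (fv f c) = c;
  fe_col : forall f (r : {set color}), r \subset fcol f -> #|r| = 2%N -> ecol (fe f r) = r;
  fe_ev : forall f (r : {set color}) c, r \subset fcol f -> #|r| = 2%N -> c \in r ->
            ev (fe f r) c = fv f c;
  tv_col : forall t c, vcol (tv t c) = c;
  te_col : forall t (s : {set color}), #|s| = 2%N -> ecol (te t s) = s;
  te_ev : forall t (s : {set color}) c, #|s| = 2%N -> c \in s -> ev (te t s) c = tv t c;
  tf_col : forall t (s : {set color}), #|s| = 3%N -> fcol (tf t s) = s;
  tf_fv : forall t (s : {set color}) c, #|s| = 3%N -> c \in s -> fv (tf t s) c = tv t c;
  tf_fe : forall t (s r : {set color}), #|s| = 3%N -> r \subset s -> #|r| = 2%N ->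
            fe (tf t s) r = te t r;
  (* every edge of Gamma has two (distinct) endpoints, i.e. every triangle
     of Gamma^* lies in exactly two tetrahedra *)
  tri_two : forall f, #|[set t | tf t (fcol f) == f]| = 2%N;
  (* "these form a cycle": the uw-edges of the (distinct) tetrahedra
     containing an xy-edge e are pairwise distinct *)
  link_cycle : forall e t1 t2,
      [exists s : {set color}, (#|s| == 2%N) && (te t1 s == e)] ->
      [exists s : {set color}, (#|s| == 2%N) && (te t2 s == e)] ->
      t1 != t2 -> te t1 (~: ecol e) != te t2 (~: ecol e)
}.

(* Z-type Pauli operators on a finite set of qubits X, up to phase:
   the F_2-vector of positions where Z acts; product = sum, I = 0. *)
Definition ZOp (X : finType) := {ffun X -> 'F_2}.

Section Codes.
Variable G : colex3.

Definition tcontains (t : cT G) (e : cE G) : bool :=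
  [exists s : {set color}, (#|s| == 2%N) && (te t s == e)].

Definition is_edge_of (x y : color) (e : cE G) : bool := ecol e == [set x; y].

Definition BZ (e : cE G) : ZOp (cT G) := [ffun t => (tcontains t e)%:R].

Definition cc_Zstab (S : ZOp (cT G)) : Prop :=
  exists A : {set cE G}, S = \sum_(e in A) BZ e.

Definition proj (x y : color) (t : cT G) : cE G := te t (~: [set x; y]).

Definition projZ (x y : color) (S : ZOp (cT G)) : ZOp (cE G) :=
  [ffun g => \sum_(t | proj x y t == g) S t].

(* boundary of the face f_e of the minor complex Gamma^{* \ xy}:
   the uw-edges of the tetrahedra containing the xy-edge e *)
Definition minor_bd (x y : color) (e : cE G) : {set cE G} :=
  [set proj x y t | t in [set t | tcontains t e]].

Definition BM (x y : color) (e : cE G) : ZOp (cE G) :=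
  [ffun g => (g \in minor_bd x y e)%:R].

Definition toric_Zstab (x y : color) (S : ZOp (cE G)) : Prop :=
  exists A : {set cE G}, (forall e, e \in A -> is_edge_of x y e) /\
                         S = \sum_(e in A) BM x y e.

End Codes.

(* Main.v *)
Require Import Defs.
From mathcomp Require Import all_boot all_algebra.
Import GRing.Theory.
Local Open Scope ring_scope.

Section H.
Variable G : colex3.

Lemma te_same (t t' : cT G) (s r : {set color}) : #|s| = 3%N -> tf t s = tf t' s ->
  r \subset s -> #|r| = 2%N -> te t r = te t' r.
Proof. by move=> s3 E rs r2; rewrite -(tf_fe t s3 rs r2) -(tf_fe t' s3 rs r2) E. Qed.

Lemma contains_cc (t : cT G) e c c' : is_edge_of c c' e -> tcontains t e ->
  te t [set c; c'] = e.
Proof.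
rewrite /is_edge_of => /eqP He /existsP[s0 /andP[/eqP s2 /eqP Hs]].
have: ecol e = s0 by rewrite -Hs te_col.
by rewrite He => ->.
Qed.

Lemma card2 (x y : color) : x != y -> #|[set x; y]| = 2%N.
Proof. by move=> xy; rewrite cards2 xy. Qed.

Lemma cardC2 (x y : color) : x != y -> #|~: [set x; y]| = 2%N.
Proof. move=> xy; have := cardsC [set x; y]; rewrite card_ord card2 // => H.
by apply/eqP; rewrite -(eqn_add2l 2) H. Qed.

Lemma projZ_sum (x y : color) (A : {set cE G}) (F : cE G -> ZOp (cT G)) :
  projZ x y (\sum_(e in A) F e) = \sum_(e in A) projZ x y (F e).
Proof.
apply/ffunP => g; rewrite !ffunE sum_ffunE.
under eq_bigr do rewrite sum_ffunE.
rewrite exchange_big; apply: eq_bigr => e _; by rewrite ffunE.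
Qed.

Lemma to_count (P Q : pred (cT G)) :
  \sum_(t | P t) ((Q t)%:R : 'F_2) = \sum_(t | P t && Q t) 1.
Proof. by rewrite big_mkcondr /=; apply eq_bigr => t _; case: (Q t). Qed.

Lemma even_case (e : cE G) (c c' x y : color) (g : cE G) : c != c' -> x != y -> [set x; y] != [set c; c'] ->
  is_edge_of c c' e -> projZ x y (BZ e) g = 0.
Proof.
move=> cc xy Hneq He.
have [z Hz1 Hz2] : exists2 z, z \in [set x; y] & z \notin [set c; c'].
  case Hx: (x \in [set c; c']); last by exists x; rewrite ?Hx // !inE eqxx.
  case Hy: (y \in [set c; c']); last by exists y; rewrite ?Hy // !inE eqxx orbT.
  exfalso; move: Hx Hy Hneq xy; rewrite !inE => /orP[]/eqP-> /orP[]/eqP->;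
    by rewrite ?eqxx // setUC eqxx.
pose s := ~: [set z].
have s3 : #|s| = 3%N by rewrite cardsC1 card_ord.
have Hcs : [set c; c'] \subset s.
  apply/subsetP => u Hu; rewrite inE in_set1; apply/eqP => Euz.
  by rewrite -Euz Hu in Hz2.
have Hxs : ~: [set x; y] \subset s.
  apply/subsetP => u; rewrite !inE => Hu; apply/eqP => Euz.
  by rewrite Euz -in_set2 Hz1 in Hu.
rewrite ffunE; under eq_bigr do rewrite ffunE.
rewrite to_count (partition_big (fun t => tf t s) predT) //=.
apply: big1 => f _.
case: (pickP (fun t => [&& proj x y t == g, tcontains t e & tf t s == f]))
  => [t0 /and3P[Hg Hc /eqP Hf] | none].
- transitivity (\sum_(t in [set t | tf t (fcol f) == f]) (1 : 'F_2)).
    apply: eq_bigl => t; rewrite inE -Hf tf_col //.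
    apply/idP/idP; first by case/andP.
    move/eqP=> Htf; rewrite Htf eqxx andbT.
    rewrite /proj (te_same _ _ _ _ s3 Htf Hxs (cardC2 _ _ xy)) -/(proj x y t0) Hg /=.
    apply/existsP; exists [set c; c']; rewrite card2 // eqxx /=.
    by rewrite (te_same _ _ _ _ s3 Htf Hcs (card2 _ _ cc)) (contains_cc _ _ _ _ He Hc).
  by rewrite sumr_const tri_two; apply: val_inj.
- apply: big1 => t /andP[/andP[H1 H2] H3].
  by have := none t; rewrite /= H1 H2 H3.
Qed.

Lemma odd_case (e : cE G) (c c' : color) (g : cE G) : c != c' -> is_edge_of c c' e ->
  projZ c c' (BZ e) g = BM c c' e g.
Proof.
move=> cc He.
rewrite !ffunE; under eq_bigr do rewrite ffunE.
rewrite to_count.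
case: (pickP (fun t => (proj c c' t == g) && tcontains t e)) => [t0 /andP[Hg Hc] | none].
- have ->: g \in minor_bd c c' e.
    by apply/imsetP; exists t0; rewrite ?inE // (eqP Hg).
  rewrite (big_pred1 t0) // => t /=.
  apply/idP/eqP; last by move=> ->; rewrite Hg Hc.
  move/andP=> [Hg' Hc']; case: (t =P t0) => // /eqP Hne.
  have := link_cycle Hc' Hc Hne.
  by rewrite (eqP He) -/(proj c c' t) -/(proj c c' t0) (eqP Hg') (eqP Hg) eqxx.
- have ->: g \in minor_bd c c' e = false.
    apply/negbTE/imsetP => [[t]]; rewrite inE => Hc Heq.
    by have := none t; rewrite /= Heq eqxx Hc.
  by rewrite big_pred0.
Qed.

End H.

Theorem lemma11 (G : colex3) (c c' : color) (Hcc : c != c')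
    (S : ZOp (cE G)) :
  toric_Zstab c c' S ->
  exists Sbar : ZOp (cT G),
    cc_Zstab Sbar /\ projZ c c' Sbar = S /\
    (forall x y : color, x != y -> [set x; y] != [set c; c'] ->
       projZ x y Sbar = 0).
Proof.
move=> [A [HA ->]].
exists (\sum_(e in A) BZ e); split; first by exists A.
rewrite projZ_sum; split.
  apply: eq_bigr => e He; apply/ffunP => g; exact: odd_case (HA e He).
move=> x y xy Hn; rewrite projZ_sum; apply: big1 => e He.
apply/ffunP => g; rewrite [RHS]ffunE; exact: (even_case _ _ _ _ _ _ _ Hcc xy Hn (HA e He)).
Qed.
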